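(* For a set $\mathcal{R}$ of languages over $\Sigma$ and a regular language $R\subseteq\Sigma^*$ let $\mathcal{R}\,\dot\cap\,R=\{L\cap R\mid L\in\mathcal{R}\}$. (1) Rational sets of regular languages are not closed under point-wise intersection: there exist a rational set of regular languages $\mathcal{R}$ and a regular $R$ such that $\mathcal{R}\,\dot\cap\,R$ is not a rational set of regular languages. (2) If $\mathcal{R}$ is a finite rational set of regular languages and $R$ is regular, then $\mathcal{R}\,\dot\cap\,R$ is a finite rational set of regular languages. (3) In the latter case a different language substitution is in general required: there exist an alphabet $\Delta$, a regular language substitution $\varphi:\Delta\to2^{\Sigma^*}$, a regular $K\subseteq\Delta^+$ with $\mathcal{R}=(K,\varphi)$ finite, and a regular $R\subseteq\Sigma^*$ such that there is no regular $K'\subseteq\Delta^+$ with $\mathcal{R}\,\dot\cap\,R=(K',\varphi)$.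
   Context: Alphabets are nonempty finite sets. A regular language substitution $\varphi:\Delta\to2^{\Sigma^*}$ maps each symbol to a regular language over $\Sigma$, extended by $\varphi(\delta w)=\varphi(\delta)\varphi(w)$. A set $\mathcal{R}$ of regular languages over $\Sigma$ is a rational set of regular languages, written $\mathcal{R}=(K,\varphi)$, if there are an alphabet $\Delta$, a regular $K\subseteq\Delta^+$ and a regular language substitution $\varphi$ with $\mathcal{R}=\{\varphi(w)\mid w\in K\}$. *)

(* Defs.v *)
From Stdlib Require List.
From mathcomp Require Import all_boot.
Set Implicit Arguments. Unset Strict Implicit. Unset Printing Implicit Defensive.

Definition alphabet (S : finType) : Prop := 0 < #|S|.

Definition lang (S : finType) := seq S -> Prop.
Definition lang_eq (S : finType) (L1 L2 : lang S) : Prop := forall w, L1 w <-> L2 w.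

Definition regular (S : finType) (L : lang S) : Prop :=
  exists (Q : finType) (q0 : Q) (d : Q -> S -> Q) (F : pred Q),
    forall w, L w <-> F (foldl d q0 w).

Definition eps_lang (S : finType) : lang S := fun w => w = [::].
Definition conc (S : finType) (L1 L2 : lang S) : lang S :=
  fun w => exists u v, w = u ++ v /\ L1 u /\ L2 v.
Definition lang_inter (S : finType) (L1 L2 : lang S) : lang S :=
  fun w => L1 w /\ L2 w.

Definition reg_subst (D S : finType) (phi : D -> lang S) : Prop :=
  forall d, regular (phi d).

Definition subst_word (D S : finType) (phi : D -> lang S) (w : seq D) : lang S :=
  foldr (fun d L => conc (phi d) L) (@eps_lang S) w.

(* Sets of languages, considered up to extensional equality of languages. *)
Definition langset (S : finType) := lang S -> Prop.

Definition pres_set (D S : finType) (K : lang D) (phi : D -> lang S) : langset S :=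
  fun L => exists w, K w /\ lang_eq L (subst_word phi w).

Definition is_presented (D S : finType) (K : lang D) (phi : D -> lang S)
  (R : langset S) : Prop :=
  forall L, R L <-> pres_set K phi L.

Definition reg_plus (D : finType) (K : lang D) : Prop :=
  regular K /\ forall w, K w -> w <> [::].

Definition rational_set (S : finType) (R : langset S) : Prop :=
  exists (D : finType) (K : lang D) (phi : D -> lang S),
    alphabet D /\ reg_plus K /\ reg_subst phi /\ is_presented K phi R.

Definition finite_langset (S : finType) (R : langset S) : Prop :=
  exists s : list (lang S), forall L, R L <-> exists2 L', List.In L' s & lang_eq L L'.

Definition pw_inter (S : finType) (R : langset S) (Rg : lang S) : langset S :=
  fun L => exists L0, R L0 /\ lang_eq L (lang_inter L0 Rg).

(* Main.v *)
Require Import Defs.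
From mathcomp Require Import all_boot.
From mathcomp Require Import zify.
Set Implicit Arguments. Unset Strict Implicit. Unset Printing Implicit Defensive.

Lemma regular_eq (S : finType) (L1 L2 : lang S) : lang_eq L1 L2 -> regular L1 -> regular L2.
Proof.
move=> E [Q [q0 [d [F H]]]]; exists Q, q0, d, F => w.
by split => [/E /H|/H /E].
Qed.

Lemma foldl_pair (S Q1 Q2 : Type) (d1 : Q1 -> S -> Q1) (d2 : Q2 -> S -> Q2) w p q :
  foldl (fun pq x => (d1 pq.1 x, d2 pq.2 x)) (p, q) w = (foldl d1 p w, foldl d2 q w).
Proof. by elim: w p q => //= x w IH p q; rewrite IH. Qed.

Lemma reg_inter (S : finType) (A B : lang S) : regular A -> regular B -> regular (lang_inter A B).
Proof.
move=> [Q1 [q1 [d1 [F1 H1]]]] [Q2 [q2 [d2 [F2 H2]]]].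
exists (Q1 * Q2)%type, (q1, q2), (fun pq x => (d1 pq.1 x, d2 pq.2 x)),
  (fun pq => F1 pq.1 && F2 pq.2) => w.
rewrite foldl_pair /lang_inter /=.
split => [[a b]|/andP [a b]].
  by apply/andP; split; [apply/H1|apply/H2].
by split; [apply/H1|apply/H2].
Qed.

Lemma foldl_const (S Q : Type) (c : Q) q (w : seq S) :
  foldl (fun _ _ => c) q w = if w is [::] then q else c.
Proof. by elim: w q => //= x w IH q; rewrite IH; case: w {IH}. Qed.

Lemma reg_eps (S : finType) : regular (@eps_lang S).
Proof.
exists bool, true, (fun _ _ => false), (fun b => b) => w.
rewrite foldl_const /eps_lang; by case: w.
Qed.

Lemma reg_nonempty (S : finType) : regular (fun w : seq S => w <> [::]).
Proof.
exists bool, false, (fun _ _ => true), (fun b => b) => w.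
rewrite foldl_const; by case: w.
Qed.

Lemma reg_empty (S : finType) : regular (fun _ : seq S => False).
Proof. by exists unit, tt, (fun _ _ => tt), (fun _ => false). Qed.

Definition d1s (S : Type) (q : option bool) (x : S) : option bool :=
  if q is None then Some true else Some false.

Lemma reg_size1 (S : finType) : regular (fun w : seq S => size w = 1).
Proof.
exists (option bool), None, (@d1s S), (fun q => q == Some true) => w.
have hf : forall w, foldl (@d1s S) (Some false) w = Some false.
  by elim=> //.
case: w => [|x [|y w]] //=; by rewrite hf.
Qed.

Definition dC (S Q1 Q2 : finType) (d1 : Q1 -> S -> Q1) (F1 : pred Q1) (q2 : Q2)
  (d2 : Q2 -> S -> Q2) (pS : Q1 * {set Q2}) (x : S) : Q1 * {set Q2} :=
  (d1 pS.1 x, [set d2 q x | q in pS.2] :|: (if F1 (d1 pS.1 x) then [set q2] else set0)).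
Definition FC (Q1 Q2 : finType) (F2 : pred Q2) (pS : Q1 * {set Q2}) : bool :=
  [exists q in pS.2, F2 q].

Lemma dC_spec (S Q1 Q2 : finType) (d1 : Q1 -> S -> Q1) (F1 : pred Q1) (q2 : Q2)
  (d2 : Q2 -> S -> Q2) (F2 : pred Q2) w pS :
  FC F2 (foldl (dC d1 F1 q2 d2) pS w) <->
  (exists2 q, q \in pS.2 & F2 (foldl d2 q w)) \/
  (exists u v, [/\ w = u ++ v, u <> [::], F1 (foldl d1 pS.1 u) & F2 (foldl d2 q2 v)]).
Proof.
elim: w pS => [|x w IH] pS /=.
  rewrite /FC /=; split.
    by move=> /existsP [q /andP [qT Fq]]; left; exists q.
  case=> [[q qT Fq]|[u [v [e un _ _]]]]; first by apply/existsP; exists q; rewrite qT.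
  by case: u e un => [|y u] //=.
rewrite IH; split.
  case=> [[q]|[u [v [-> un Fu Fv]]]].
    rewrite /dC /= in_setU => /orP [/imsetP [q' q'T ->] Fq|].
      by left; exists q'.
    case: ifP => [F1x|]; last by rewrite in_set0.
    rewrite in_set1 => /eqP -> Fq.
    by right; exists [:: x], w; split.
  by right; exists (x :: u), v; split.
case=> [[q qT Fq]|[u [v [e un Fu Fv]]]].
  left; exists (d2 q x) => //.
  by rewrite /dC /= in_setU; apply/orP; left; apply/imsetP; exists q.
case: u e un Fu => [//|y u] /= [<- e] _ Fu.
case: u e Fu => [|z u] e Fu.
  left; exists q2; last by rewrite e.
  by rewrite /dC /= in_setU Fu in_set1 eqxx orbT.
by right; exists (z :: u), v; split.
Qed.

Lemma reg_conc (S : finType) (A B : lang S) : regular A -> regular B -> regular (conc A B).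
Proof.
move=> [Q1 [q1 [d1 [F1 H1]]]] [Q2 [q2 [d2 [F2 H2]]]].
exists (Q1 * {set Q2})%type, (q1, if F1 q1 then [set q2] else set0),
  (dC d1 F1 q2 d2), (FC F2) => w.
rewrite dC_spec /=; split.
  case=> u [v [-> [/H1 Au /H2 Bv]]].
  case: u Au => [|x u] Au.
    by left; exists q2 => //; rewrite /= Au in_set1.
  by right; exists (x :: u), v.
case=> [[q]|[u [v [e _ Fu Fv]]]].
  case: ifP => F1q; last by rewrite in_set0.
  rewrite in_set1 => /eqP -> Fq.
  by exists [::], w; split => //; split; [apply/H1|apply/H2].
by exists u, v; split => //; split; [apply/H1|apply/H2].
Qed.

Lemma reg_subst_word (S D : finType) (phi : D -> lang S) w :
  reg_subst phi -> regular (subst_word phi w).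
Proof. move=> H; elim: w => [|d w IH] /=; [exact: reg_eps | exact: reg_conc]. Qed.

Definition dab (q : option bool) (x : bool) : option bool :=
  match q, x with
  | Some true, true => Some true
  | Some true, false => Some false
  | Some false, false => Some false
  | _, _ => None end.
Definition Rab : lang bool := fun w => foldl dab (Some true) w != None.

Lemma reg_Rab : regular Rab.
Proof. by exists (option bool), (Some true), dab, (fun q => q != None). Qed.

Lemma dab_None w : foldl dab None w = None.
Proof. by elim: w. Qed.
Lemma dab_tt n : foldl dab (Some true) (nseq n true) = Some true.
Proof. by elim: n. Qed.
Lemma dab_ff n : foldl dab (Some false) (nseq n false) = Some false.
Proof. by elim: n. Qed.
Lemma dab_tf n : foldl dab (Some true) (nseq n.+1 false) = Some false.
Proof. by rewrite /= dab_ff. Qed.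

Lemma Rab_true n : Rab (nseq n true).
Proof. by rewrite /Rab dab_tt. Qed.
Lemma Rab_false n : Rab (nseq n false).
Proof. by case: n => [|n]; rewrite /Rab ?dab_tf. Qed.
Lemma Rab_ft i k : 0 < i -> 0 < k -> ~ Rab (nseq i false ++ nseq k true).
Proof.
case: i => // i _; case: k => // k _.
by rewrite /Rab foldl_cat dab_tf /= dab_None.
Qed.

Definition Ln n : lang bool := fun w => size w = n /\ Rab w.

Lemma nseq_part (b : bool) n u v : u ++ v = nseq n b ->
  u = nseq (size u) b /\ v = nseq (size v) b.
Proof.
move=> e.
have : all (pred1 b) (u ++ v) by rewrite e all_nseq /= eqxx orbT.
by rewrite all_cat => /andP [/all_pred1P ? /all_pred1P ?].
Qed.

Lemma conc_split (A B : lang bool) n : 0 < n ->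
  (forall w, conc A B w <-> Ln n w) -> lang_eq A (Ln n) \/ lang_eq B (Ln n).
Proof.
move=> n0 E.
have [u [v [ea [Au Bv]]]] : conc A B (nseq n true).
  by apply/E; split; [rewrite size_nseq | exact: Rab_true].
have [u' [v' [eb [Au' Bv']]]] : conc A B (nseq n false).
  by apply/E; split; [rewrite size_nseq | exact: Rab_false].
have [hu hv] := nseq_part (esym ea).
have [hu' hv'] := nseq_part (esym eb).
have [s1 _] : Ln n (u ++ v') by apply/E; exists u, v'.
have [s2 R2] : Ln n (u' ++ v) by apply/E; exists u', v.
have szA : size u + size v = n by rewrite -size_cat -ea size_nseq.
have szB : size u' + size v' = n by rewrite -size_cat -eb size_nseq.
rewrite size_cat in s1 s2.
have eu : size u' = size u by lia.
case: (posnP (size u)) => [u0 | upos].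
  right => x; split.
    move=> Bx; apply/E; exists [::], x; split => //; split => //.
    by move/size0nil: u0 => <-.
  move=> /E [y [z [-> [Ay Bz]]]].
  have [s3 _] : Ln n (y ++ v') by apply/E; exists y, v'.
  rewrite size_cat in s3.
  have /size0nil -> : size y = 0 by lia.
  done.
case: (posnP (size v)) => [v0 | vpos].
  left => x; split.
    move=> Ax; apply/E; exists x, [::]; rewrite cats0; split => //; split => //.
    by move/size0nil: v0 => <-.
  move=> /E [y [z [-> [Ay Bz]]]].
  have [s3 _] : Ln n (u ++ z) by apply/E; exists u, z.
  rewrite size_cat in s3.
  have /size0nil -> : size z = 0 by lia.
  by rewrite cats0.
exfalso; apply: (@Rab_ft (size u) (size v)) => //.
by rewrite -eu -hu' -hv.
Qed.

Lemma subst_L (D : finType) (psi : D -> lang bool) n w : 0 < n ->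
  lang_eq (subst_word psi w) (Ln n) -> exists d, lang_eq (psi d) (Ln n).
Proof.
move=> n0; elim: w => [|d w IH] /= E.
  have [h _] := (E [::]).1 erefl.
  by rewrite -h in n0.
by case: (conc_split n0 E) => H; [exists d | exact: IH].
Qed.

Lemma Ln_inj n m : lang_eq (Ln n) (Ln m) -> n = m.
Proof.
move=> E; have [h _] := (E (nseq n true)).1 (conj (size_nseq _ _) (Rab_true n)).
by rewrite size_nseq in h.
Qed.

Definition phi1 : unit -> lang bool := fun _ w => size w = 1.
Definition K1 : lang unit := fun w => w <> [::].
Definition R1 : langset bool := pres_set K1 phi1.

Lemma subst_nseq n w : subst_word phi1 (nseq n tt) w <-> size w = n.
Proof.
elim: n w => [|n IH] w /=.
  by rewrite /eps_lang; split => [->|/size0nil].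
split.
  by move=> [u [v [-> [su /IH sv]]]]; rewrite size_cat su sv.
case: w => [|x w'] //= [sw]; exists [:: x], w'; split => //; split => //.
exact/IH.
Qed.

Lemma R1_rational : rational_set R1.
Proof.
exists unit, K1, phi1; split; first by rewrite /alphabet card_unit.
split; first by split; [exact: reg_nonempty | by []].
split; first by move=> ?; exact: reg_size1.
by move=> L.
Qed.

Lemma part1 : ~ rational_set (pw_inter R1 Rab).
Proof.
move=> [D [K [psi [aD [[rK _] [rpsi Hp]]]]]].
have hex : forall i : 'I_(#|D|.+1), exists d : D, lang_eq (psi d) (Ln i.+1).
  move=> i.
  have : pw_inter R1 Rab (Ln i.+1).
    exists (subst_word phi1 (nseq i.+1 tt)); split.
      by exists (nseq i.+1 tt); split.
    move=> w; rewrite /lang_inter subst_nseq; done.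
  move=> /Hp [w [Kw E]].
  apply: (@subst_L _ _ _ w) => // x; split => [/E|/E]; done.
have [f hf] := fin_all_exists hex.
have inj : injective f.
  move=> i j e; apply: val_inj; apply/succn_inj/Ln_inj => x.
  by rewrite -(hf i x) -(hf j x) e.
by have := leq_card f inj; rewrite card_ord ltnn.
Qed.

Lemma In_nth (T : Type) (x0 : T) (s : seq T) i : i < size s -> List.In (nth x0 s i) s.
Proof.
elim: s i => [|x s IH] [|i] //= h; first by left.
by right; apply: IH.
Qed.

Lemma nth_In (T : Type) (x0 x : T) (s : seq T) : List.In x s ->
  exists i, i < size s /\ nth x0 s i = x.
Proof.
elim: s => [|y s IH] //= [->|/IH [i [h e]]]; first by exists 0.
by exists i.+1.
Qed.

Lemma subst_single (S D : finType) (psi : D -> lang S) d :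
  lang_eq (subst_word psi [:: d]) (psi d).
Proof.
move=> w /=; split.
  by move=> [u [v [-> [pu ev]]]]; rewrite ev cats0.
by move=> pw; exists w, [::]; rewrite cats0.
Qed.

Definition dK (T : Type) (q : option bool) (x : option T) : option bool :=
  match q, x with
  | None, Some _ => Some true
  | _, _ => Some false end.

Lemma reg_K' (T : finType) : regular (fun w : seq (option T) => exists i, w = [:: Some i]).
Proof.
exists (option bool), None, (@dK T), (fun q => q == Some true) => w.
have hf : forall w, foldl (@dK T) (Some false) w = Some false by elim.
case: w => [|[x|] [|y w]] /=; rewrite ?hf; split => //; try by case.
  by exists x.
all: by move=> [i].
Qed.

Lemma part2 (S : finType) (R : langset S) (Rg : lang S) :
  alphabet S -> rational_set R -> finite_langset R -> regular Rg ->
  rational_set (pw_inter R Rg) /\ finite_langset (pw_inter R Rg).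
Proof.
move=> aS [D [K [phi [aD [[rK _] [rphi Hp]]]]]] [s Hs] rRg.
have regs : forall L', List.In L' s -> regular L'.
  move=> L' inL.
  have : R L' by apply/Hs; exists L'.
  move=> /Hp [w [_ E]].
  apply: (@regular_eq _ (subst_word phi w)); last exact: reg_subst_word.
  by move=> x; split => /E.
pose empt : lang S := fun _ => False.
pose psi (o : option 'I_(size s)) : lang S :=
  if o is Some i then lang_inter (nth empt s i) Rg else empt.
split.
  exists (option 'I_(size s)), (fun w => exists i, w = [:: Some i]), psi.
  split; first by rewrite /alphabet card_option.
  split; first by split; [exact: reg_K' | by move=> w [i ->]].
  split.
    case=> [i|]; last exact: reg_empty.
    by apply: reg_inter => //; apply: regs; apply: In_nth.
  move=> L; split.
    move=> [L0 [RL0 EL]].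
    have [L' inL EL0] := (Hs L0).1 RL0.
    have [i [lt ei]] := nth_In empt inL.
    exists [:: Some (Ordinal lt)]; split; first by eexists.
    move=> w; rewrite subst_single /= ei EL /lang_inter EL0; done.
  move=> [w [[i ->] EL]].
  exists (nth empt s i); split.
    by apply/Hs; exists (nth empt s i) => //; apply: In_nth.
  by move=> x; rewrite EL subst_single.
exists (List.map (fun L => lang_inter L Rg) s) => L; split.
  move=> [L0 [RL0 EL]].
  have [L' inL EL0] := (Hs L0).1 RL0.
  exists (lang_inter L' Rg); first by apply/List.in_map_iff; exists L'.
  by move=> x; rewrite EL /lang_inter EL0.
move=> [L'' /List.in_map_iff [L' [<- inL]] EL].
exists L'; split => //.
by apply/Hs; exists L'.
Qed.

Definition phi3 : unit -> lang unit := fun _ w => size w = 1.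
Definition K3 : lang unit := fun w => size w = 1.

Lemma part3 : exists (S D : finType) (phi : D -> lang S) (K : lang D) (Rg : lang S),
      alphabet S /\ alphabet D /\ reg_subst phi /\ reg_plus K /\
      finite_langset (pres_set K phi) /\ regular Rg /\
      ~ (exists K' : lang D, reg_plus K' /\
           is_presented K' phi (pw_inter (pres_set K phi) Rg)).
Proof.
exists unit, unit, phi3, K3, (fun _ => False).
split; first by rewrite /alphabet card_unit.
split; first by rewrite /alphabet card_unit.
split; first by move=> ?; exact: reg_size1.
split; first by split; [exact: reg_size1 | by case].
split.
  exists [:: subst_word phi3 [:: tt]] => L; split.
    move=> [w [Kw EL]]; exists (subst_word phi3 [:: tt]); first by left.
    by case: w Kw EL => [|[] [|]].
  by move=> [L' [<-|[]] EL]; exists [:: tt].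
split; first exact: reg_empty.
move=> [K' [[_ ne] Hp]].
have : pw_inter (pres_set K3 phi3) (fun _ => False) (fun _ => False).
  exists (subst_word phi3 [:: tt]); split; first by exists [:: tt].
  by move=> x; split => // [[]].
move=> /Hp [w [_ E]].
have [v hv] : exists v, subst_word phi3 w v.
  elim: w {E} => [|d w [v hv]]; first by exists [::].
  by exists ([:: tt] ++ v); exists [:: tt], v.
by apply: (E v).2.
Qed.

Theorem proposition8 :
  (* (1) *)
  (exists (S : finType) (R : langset S) (Rg : lang S),
      alphabet S /\ rational_set R /\ regular Rg /\ ~ rational_set (pw_inter R Rg))
  /\
  (* (2) *)
  (forall (S : finType) (R : langset S) (Rg : lang S),
      alphabet S -> rational_set R -> finite_langset R -> regular Rg ->
      rational_set (pw_inter R Rg) /\ finite_langset (pw_inter R Rg))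
  /\
  (* (3) *)
  (exists (S D : finType) (phi : D -> lang S) (K : lang D) (Rg : lang S),
      alphabet S /\ alphabet D /\ reg_subst phi /\ reg_plus K /\
      finite_langset (pres_set K phi) /\ regular Rg /\
      ~ (exists K' : lang D, reg_plus K' /\
           is_presented K' phi (pw_inter (pres_set K phi) Rg))).
Proof.
split.
  exists bool, R1, Rab; split; first by rewrite /alphabet card_bool.
  split; first exact: R1_rational.
  split; first exact: reg_Rab.
  exact: part1.
split; first exact: part2.
exact: part3.
Qed.
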